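(* With notation as in the context, let $V$ be a finite-dimensional $K$-vector space with a $K$-linear automorphism $[1]:V\to V$ (i.e. a finite-dimensional $K$-linear representation of $\mathbb{Z}$). Consider the $E_A$-module $V\otimes_KE_A$ with the $\sigma$-semilinear automorphism $[1](v\otimes x)=[1](v)\otimes\sigma(x)$. Then $V\otimes_KE_A$ is trivial, i.e. it has an $E_A$-basis $b''_1,\dots,b''_n$ with $[1](b''_i)=b''_i$ for all $i$; equivalently, it is isomorphic, $E_A$-linearly and compatibly with the actions, to $E_A^n$ with the action of $\sigma$ componentwise.
   Context: $K$ is an algebraically closed field of characteristic $0$. $K[t^K]$ is the group algebra over $K$ of $(K,+)$, with $K$-basis $t^a$ ($a\in K$), $t^at^b=t^{a+b}$; $K[t,t^{-1}]$ is identified with the span of $t^n$, $n\in\mathbb{Z}$. Fix a set $\widetilde{K/\mathbb{Z}}\subset K$ of representatives of $K/\mathbb{Z}$ with $0\in\widetilde{K/\mathbb{Z}}$. $A$ is a commutative ring with unit containing $K[t,t^{-1}]$ as a subring, with a derivation $\partial:A\to A$ extending $t\frac{d}{dt}$ on $K[t,t^{-1}]$. $A[t^K]:=A\otimes_{K[t,t^{-1}]}K[t^K]$ and $E_A:=A[t^K][\ell]$ with $\ell$ an indeterminate. Fix a group isomorphism $\overline{\gamma}:K/\mathbb{Z}\to K^\times$ and set $\gamma:=\overline{\gamma}\circ\pi:K\to K^\times$ ($\pi$ the projection). $\sigma$ is the unique ring automorphism of $E_A$ with $\sigma(f)=f$ for $f\in A$, $\sigma(t^a)=\gamma(a)t^a$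 for $a\in K$, $\sigma(\ell)=\ell+1$. *)

(* Defs.v *)
From HB Require Import structures.
From mathcomp Require Import all_boot all_order all_algebra all_field.
Set Implicit Arguments.
Unset Strict Implicit.
Unset Printing Implicit Defensive.
Import GRing.Theory.
Local Open Scope ring_scope.

(* A (K,+)-character with values in a commutative ring S, compatible with a
   ring map f : A -> S on K[t,t^{-1}] (i.e. t^1 |-> f t).  Such characters
   are exactly the K-algebra maps K[t^K] -> S agreeing with f on
   K[t,t^{-1}] (the value t^a |-> chi a). *)
Definition compat_char (K : fieldType) (A : comAlgType K) (t : A)
  (S : comPzRingType) (f : A -> S) (chi : K -> S) : Prop :=
  [/\ chi 0 = 1, (forall a b, chi (a + b) = chi a * chi b) & chi 1 = f t].

(* (E, iota, tau, ell) is E_A = (A (x)_{K[t,t^{-1}]} K[t^K])[ell], with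
   iota : A -> E_A, tau a = 1 (x) t^a, ell the indeterminate, characterized by
   its defining universal property (pushout of commutative rings, then
   adjoining a free variable). *)
Definition is_EA (K : fieldType) (A : comAlgType K) (t : A)
  (E : comNzRingType) (iota : {rmorphism A -> E}) (tau : K -> E) (ell : E)
  : Prop :=
  compat_char t iota tau /\
  forall (S : comPzRingType) (f : {rmorphism A -> S}) (chi : K -> S) (s : S),
    compat_char t f chi ->
    exists h : {rmorphism E -> S},
      [/\ forall x, h (iota x) = f x,
          forall a, h (tau a) = chi a,
          h ell = s &
          forall h' : {rmorphism E -> S},
            (forall x, h' (iota x) = f x) ->
            (forall a, h' (tau a) = chi a) ->
            h' ell = s -> h' =1 h].

(* The sigma-semilinear action on V (x)_K E_A = E_A^n, for V = K^n (row
   vectors) with [1] v = v *m M:  [1](v (x) x) = [1](v) (x) sigma(x). *)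
Definition shift_act (K : fieldType) (A : comAlgType K) (E : comNzRingType)
  (iota : {rmorphism A -> E}) (sigma : E -> E) (n : nat) (M : 'M[K]_n)
  (w : 'rV[E]_n) : 'rV[E]_n :=
  map_mx sigma w *m map_mx (fun c : K => iota (c%:A)) M.

(* Main.v *)
Require Import Defs.
From HB Require Import structures.
From mathcomp Require Import all_boot all_order all_algebra all_field all_fingroup.
From mathcomp Require Import ring.
Import GRing.Theory.
Local Open Scope ring_scope.


Section Poly.
Variable K : fieldType.
Hypothesis charK : [pchar K] =i pred0.

Lemma coefX1 m j : ((('X + 1%:P) ^+ m : {poly K})`_j) = ('C(m, j))%:R.
Proof.
elim: m j => [|m IH] j.
  by rewrite expr0 coef1 bin0n; case: j.
rewrite exprSr mulrDr polyC1 mulr1 coefD coefMX.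
case: j => [|j] /=; first by rewrite add0r IH !bin0.
by rewrite !IH binS natrD addrC.
Qed.

Lemma compXn (q : {poly K}) m : 'X^m \Po q = q ^+ m.
Proof.
elim: m => [|m IH]; first by rewrite expr0 comp_polyC.
by rewrite exprSr comp_polyM IH comp_polyX exprSr.
Qed.

Definition Dop (mu : K) (p : {poly K}) := p - mu *: (p \Po ('X + 1%:P)).

Lemma Dop_lin mu a p p' : Dop mu (a *: p + p') = a *: Dop mu p + Dop mu p'.
Proof.
rewrite /Dop comp_polyD comp_polyZ scalerDr !scalerBr !scalerA mulrC.
by rewrite opprD addrACA.
Qed.

Lemma Dop_key mu d : exists p0, (size (Dop mu p0 - 'X^d)%R <= d)%N.
Proof.
have cD c m j : (Dop mu (c *: 'X^m))`_j = c * ((j == m)%:R - mu * ('C(m, j))%:R).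
  by rewrite /Dop comp_polyZ compXn coefB !coefZ coefXn coefX1 mulrBr mulrA mulrC mulrA [mu * c]mulrC.
have [mu1|mu1] := eqVneq mu 1.
  have hd : (d.+1%:R : K) != 0 by move/pcharf0P: charK => ->.
  exists (- (d.+1%:R)^-1 *: 'X^(d.+1)).
  apply/leq_sizeP => j hj; rewrite coefB cD coefXn mu1 mul1r.
  case: (ltngtP j d.+1) => [hjd|hjd|->].
  - have -> : j = d by apply/eqP; rewrite eqn_leq hj -ltnS hjd.
    rewrite binSn eqxx /= sub0r mulrN mulNr opprK mulVf //.
    by rewrite subrr.
  - rewrite bin_small // (gtn_eqF (ltn_trans (ltnSn d) hjd)) /=.
    by rewrite ?mulr0n ?subr0 ?mulr0 ?subrr ?oppr0.
  - by rewrite binn /= (gtn_eqF (ltnSn d)) subrr mulr0 subr0.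
have hm : (1 - mu) != 0 by rewrite subr_eq0 eq_sym.
exists ((1 - mu)^-1 *: 'X^d).
apply/leq_sizeP => j hj; rewrite coefB cD coefXn.
case: (ltngtP j d) => [hjd|hjd|->].
- by move: hj; rewrite leqNgt hjd.
- by rewrite bin_small //= mulr0 subrr mulr0 subrr.
- by rewrite binn /= mulr1 mulVf // subrr.
Qed.

Lemma Dop_surj mu q : exists p, Dop mu p = q.
Proof.
suff H : forall d (q : {poly K}), (size q <= d)%N -> exists p, Dop mu p = q.
  exact: (H _ q (leqnn _)).
clear q; elim=> [|d IH] q hq.
  move: hq; rewrite leqn0 size_poly_eq0 => /eqP ->.
  by exists 0; rewrite /Dop comp_poly0 scaler0 subr0.
have [p0 hp0] := Dop_key mu d.
have [p' hp'] : exists p', Dop mu p' = q - q`_d *: Dop mu p0.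
  apply: IH; apply/leq_sizeP => j hj.
  rewrite coefB coefZ.
  have -> : (Dop mu p0)`_j = ('X^d : {poly K})`_j + (Dop mu p0 - 'X^d)`_j.
    by rewrite (coefB (Dop mu p0) 'X^d) addrCA subrr addr0.
  rewrite (leq_sizeP _ _ hp0) // addr0 coefXn.
  case: (ltngtP j d) => [hjd|hjd|->].
  - by move: hj; rewrite leqNgt hjd.
  - by rewrite /= mulr0 subr0 (leq_sizeP _ _ hq).
  - by rewrite /= mulr1 subrr.
exists (q`_d *: p0 + p'); rewrite Dop_lin hp'.
by rewrite addrC subrK.
Qed.
End Poly.

Section Emod.
Variable K : closedFieldType.
Hypothesis charK : [pchar K] =i pred0.
Variables (A : comAlgType K) (E : comNzRingType) (iota : {rmorphism A -> E}).
Variables (tau : K -> E) (ell : E) (sigma : {rmorphism E -> E}) (gamma : K -> K).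
Hypothesis tau0 : tau 0 = 1.
Hypothesis tauD : forall a b, tau (a + b) = tau a * tau b.
Hypothesis sigma_A : forall x, sigma (iota x) = iota x.
Hypothesis sigma_t : forall a, sigma (tau a) = iota ((gamma a)%:A) * tau a.
Hypothesis sigma_ell : sigma ell = ell + 1.
Hypothesis gamma_surj : forall y, y != 0 -> exists a, gamma a = y.

Definition kk : {rmorphism K -> E} := iota \o in_alg A.
Lemma kkE c : kk c = iota (c%:A). Proof. by []. Qed.
Lemma sigma_k c : sigma (kk c) = kk c. Proof. exact: sigma_A. Qed.

Definition PP (p : {poly K}) : E := (map_poly kk p).[ell].

Lemma PP_lin mu p q : PP (p - mu *: q) = PP p - kk mu * PP q.
Proof.
have H : map_poly kk (p - mu *: q) = map_poly kk p - map_poly kk (mu *: q).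
  exact: raddfB.
by rewrite /PP H map_polyZ hornerD hornerN hornerZ.
Qed.

Lemma PP_scale c p : PP (c *: p) = kk c * PP p.
Proof. by rewrite /PP map_polyZ hornerZ. Qed.

Lemma PP1 : PP 1 = 1.
Proof. by rewrite /PP rmorph1 hornerC. Qed.

Lemma PP_sigma p : sigma (PP p) = PP (p \Po ('X + 1%:P)).
Proof.
rewrite /PP -horner_map /= sigma_ell map_comp_poly horner_comp map_polyXaddC.
rewrite hornerD hornerX hornerC rmorph1; congr (_.[_]).
rewrite -map_poly_comp; apply: eq_map_poly => c /=; exact: sigma_k.
Qed.

Inductive G : E -> Prop :=
| G0 : G 0
| GD x y : G x -> G y -> G (x + y)
| GT a p : G (tau a * PP p).

Lemma G_scale c x : G x -> G (x * kk c).
Proof.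
elim=> [|y z _ Hy _ Hz|a p]; first by rewrite mul0r; exact: G0.
  by rewrite mulrDl; exact: GD.
have -> : tau a * PP p * kk c = tau a * PP (c *: p) by rewrite PP_scale; ring.
exact: GT.
Qed.

Lemma G_sigma x : G x -> G (sigma x).
Proof.
elim=> [|y z _ Hy _ Hz|a p]; first by rewrite rmorph0; exact: G0.
  by rewrite rmorphD; exact: GD.
rewrite rmorphM sigma_t PP_sigma -kkE.
have -> : kk (gamma a) * tau a * PP (p \Po ('X + 1%:P)) =
  tau a * PP (gamma a *: (p \Po ('X + 1%:P))) by rewrite PP_scale; ring.
exact: GT.
Qed.

Lemma G_big m (F : 'I_m -> E) : (forall i, G (F i)) -> G (\sum_i F i).
Proof.
move=> HF; apply: (big_ind G); [exact: G0 | exact: GD | move=> i _; exact: HF].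
Qed.

Lemma G_solve lam r : G r -> exists x, G x /\ x = kk lam * sigma x + r.
Proof.
elim=> [|y z _ [x1 [G1 E1]] _ [x2 [G2 E2]]|a q].
- by exists 0; split; [exact: G0 | rewrite rmorph0 mulr0 addr0].
- exists (x1 + x2); split; first exact: GD.
  by rewrite rmorphD mulrDr addrACA -E1 -E2.
- have [p Hp] := @Dop_surj _ charK (lam * gamma a) q.
  exists (tau a * PP p); split; first exact: GT.
  rewrite -Hp /Dop PP_lin rmorphM sigma_t PP_sigma -kkE rmorphM.
  ring.
Qed.

Lemma tau_unit a : exists y, tau a * y = 1.
Proof. by exists (tau (- a)); rewrite -tauD subrr tau0. Qed.

Lemma exists_eig n (M : 'M[K]_n.+1) : exists lam, exists2 v : 'rV_n.+1, v *m M = lam *: v & v != 0.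
Proof.
have [lam Hl] : exists lam, root (char_poly M) lam.
  by apply/closed_rootP; rewrite size_char_poly.
by exists lam; apply/eigenvalueP; rewrite eigenvalue_root_char.
Qed.

Lemma complete n (v : 'rV[K]_(1 + n)) : v != 0 ->
  exists P : 'M[K]_(1 + n), P \in unitmx /\ usubmx P = v.
Proof.
move=> vn0.
have [j Hj] : exists j, v 0 j != 0.
  case: (pickP (fun j => v 0 j != 0)) => [j Hj|H]; first by exists j.
  case/negP: vn0; apply/eqP/matrixP => i j; rewrite ord1 mxE.
  by move: (H j) => /= /negbFE /eqP.
pose t : 'M[K]_(1 + n) := tperm_mx (0 : 'I_(1 + n)) j.
have tt : t *m t = 1%:M by rewrite /t /tperm_mx -perm_mxM tperm2 perm_mx1.
pose v' := v *m t.
pose P' : 'M[K]_(1 + n) := block_mx (lsubmx v') (rsubmx v') 0 1%:M.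
exists (P' *m t); split.
  rewrite unitmx_mul unitmx_perm andbT unitmxE /P' det_ublock det1 mulr1.
  rewrite det_mx11 mxE unitfE.
  have -> : v' 0 (lshift n 0) = v 0 j.
    rewrite /v' -xcolE xcolEsub mxE.
    have -> : lshift n (0 : 'I_1) = 0 by apply/val_inj.
    by rewrite tpermL.
  exact: Hj.
by rewrite -mul_usub_mx /P' block_mxEv col_mxKu hsubmxK /v' -mulmxA tt mulmx1.
Qed.

Lemma main_ind n (M : 'M[K]_n) : M \in unitmx -> exists B : 'M[E]_n,
  (forall i j, G (B i j)) /\ (exists y, \det B * y = 1) /\
  map_mx sigma B *m map_mx kk M = B.
Proof.
elim: n M => [|n IH] M Mu.
  exists 1%:M; split; first by move=> i; case: i.
  split; first by exists 1; rewrite det1 mulr1.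
  by apply/matrixP => i; case: i.
have [lam [v Hv vn0]] := @exists_eig _ M.
have [P [Pu Pv]] := @complete n v vn0.
pose T : 'M[K]_(1 + n) := P *m M *m invmx P.
have PMT : P *m M = T *m P by rewrite /T mulmxKV.
have uT : usubmx T = row_mx lam%:M 0.
  rewrite /T -!mul_usub_mx Pv Hv -scalemxAl -Pv mul_usub_mx (mulmxV Pu).
  by rewrite (scalar_mx_block 1 n 1) block_mxEv col_mxKu scale_row_mx scalemx1 scaler0.
have Tul : ulsubmx T = lam%:M by rewrite -[ulsubmx T]/(lsubmx (usubmx T)) uT row_mxKl.
have Tur : ursubmx T = 0 by rewrite -[ursubmx T]/(rsubmx (usubmx T)) uT row_mxKr.
have Tdef : T = block_mx lam%:M 0 (dlsubmx T) (drsubmx T).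
  by rewrite -{1}(submxK T) Tul Tur.
set c := dlsubmx T in Tdef; set M' := drsubmx T in Tdef.
have Tu : T \in unitmx by rewrite /T !unitmx_mul Pu Mu unitmx_inv Pu.
have [lamn0 M'u] : lam != 0 /\ M' \in unitmx.
  move: Tu; rewrite Tdef unitmxE det_lblock det_scalar1 unitrM unitfE.
  by case/andP => -> H; split; rewrite // unitmxE.
have [B' [GB' [[y' Hy'] HB']]] := IH M' M'u.
have [a Ha] := gamma_surj _ (invr_neq0 lamn0).
pose r := map_mx sigma B' *m map_mx kk c.
have Gr : forall i, G (r i 0).
  move=> i; rewrite mxE; apply: G_big => k0; rewrite !mxE.
  apply: G_scale; apply: G_sigma; exact: GB'.
have [f Hf] : exists f : 'I_n -> E, forall i, G (f i) /\ f i = kk lam * sigma (f i) + r i 0.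
  apply: (@fin_all_exists _ (fun _ => E) (fun i x => G x /\ x = kk lam * sigma x + r i 0)) => i.
  exact: G_solve (Gr i).
pose X : 'cV[E]_n := \col_i f i.
pose C : 'M[E]_(1 + n) := block_mx (tau a)%:M 0 X B'.
have HC : map_mx sigma C *m map_mx kk T = C.
  rewrite Tdef /C !map_block_mx mulmx_block !map_mx0 !map_scalar_mx /=.
  rewrite !mulmx0 !mul0mx !addr0 !add0r HB'.
  congr block_mx.
  - rewrite -scalar_mxM sigma_t -kkE Ha.
    by rewrite mulrAC -rmorphM mulVf // rmorph1 mul1r.
  - apply/matrixP => i j; rewrite ord1 mul_mx_scalar !mxE.
    by rewrite [RHS](Hf i).2 /r [in RHS]mxE.
have GC : forall i j, G (C i j).
  move=> i j; rewrite /C; case: (split_ordP i) => i' ->; case: (split_ordP j) => j' ->.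
  - rewrite block_mxEul mxE !ord1 eqxx mulr1n -[tau a]mulr1 -PP1; exact: GT.
  - rewrite block_mxEur mxE; exact: G0.
  - rewrite block_mxEdl mxE; exact: (Hf i').1.
  - rewrite block_mxEdr; exact: GB'.
have sk : forall N : 'M[K]_(1 + n), map_mx sigma (map_mx kk N) = map_mx kk N.
  by move=> N; apply/matrixP => i j; rewrite !mxE sigma_k.
have [yc Hyc] : exists yc, \det C * yc = 1.
  have [ya Hya] := tau_unit a.
  exists (ya * y'); rewrite /C det_lblock det_scalar1.
  by rewrite mulrACA Hya Hy' mulr1.
clearbody C.
exists (C *m map_mx kk P); split; last split.
- move=> i j; rewrite mxE; apply: G_big => k0; rewrite mxE; apply: G_scale; exact: GC.
- have Pn0 : \det P != 0 by rewrite -unitfE -unitmxE.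
  exists (yc * kk ((\det P)^-1)).
  rewrite det_mulmx det_map_mx.
  have -> : \det C * kk (\det P) * (yc * kk (\det P)^-1) =
    (\det C * yc) * kk (\det P * (\det P)^-1) by rewrite rmorphM; ring.
  by rewrite Hyc mulfV // rmorph1 mul1r.
- by rewrite map_mxM sk -mulmxA -map_mxM PMT map_mxM mulmxA HC.
Qed.
End Emod.

Theorem mainTheorem7
  (* K algebraically closed of characteristic 0 *)
  (K : closedFieldType) (charK : [pchar K] =i pred0)
  (* A commutative ring containing K[t,t^{-1}] as a subring *)
  (A : comAlgType K) (t : A)
  (t_unit : exists u : A, t * u = 1)
  (t_transc : forall p : {poly K}, p != 0 -> (map_poly (in_alg A) p).[t] != 0)
  (* derivation extending t d/dt *)
  (der : A -> A)
  (der_add : forall x y, der (x + y) = der x + der y)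
  (der_mul : forall x y, der (x * y) = x * der y + der x * y)
  (der_K : forall c : K, der (c%:A) = 0)
  (der_t : der t = t)
  (* gamma = gammabar o pi, gammabar : K/Z -> K^x a group isomorphism *)
  (gamma : K -> K)
  (gamma_add : forall a b, gamma (a + b) = gamma a * gamma b)
  (gamma_neq0 : forall a, gamma a != 0)
  (gamma_ker : forall a, gamma a = 1 <-> exists z : int, a = z%:~R)
  (gamma_surj : forall y, y != 0 -> exists a, gamma a = y)
  (* E_A = A[t^K][ell] *)
  (E : comNzRingType) (iota : {rmorphism A -> E}) (tau : K -> E) (ell : E)
  (HE : is_EA t iota tau ell)
  (* sigma *)
  (sigma : {rmorphism E -> E}) (sigma_bij : bijective sigma)
  (sigma_A : forall x, sigma (iota x) = iota x)
  (sigma_t : forall a, sigma (tau a) = iota ((gamma a)%:A) * tau a)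
  (sigma_ell : sigma ell = ell + 1)
  (* V = K^n with the automorphism [1] : v |-> v *m M *)
  (n : nat) (M : 'M[K]_n) (M_inv : M \in unitmx) :
  exists B : 'M[E]_n,
    (forall i : 'I_n, shift_act iota sigma M (row i B) = row i B) /\
    (forall w : 'rV[E]_n, exists! c : 'rV[E]_n, w = c *m B).
Proof.
have [tau0 tauD _] := HE.1.
have [B [_ [[y Hy] HB]]] := @main_ind K charK A E iota tau ell sigma gamma tau0 tauD sigma_A sigma_t sigma_ell
  gamma_surj n M M_inv.
have HB' : map_mx sigma B *m map_mx (fun c : K => iota (c%:A)) M = B by [].
pose Bi := y *: \adj B.
have BBi : B *m Bi = 1%:M.
  by rewrite /Bi -scalemxAr mul_mx_adj scale_scalar_mx mulrC Hy.
have BiB : Bi *m B = 1%:M.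
  by rewrite /Bi -scalemxAl mul_adj_mx scale_scalar_mx mulrC Hy.
exists B; split.
  by move=> i; rewrite /shift_act map_row -row_mul HB'.
move=> w; exists (w *m Bi); split.
  by rewrite -mulmxA BiB mulmx1.
by move=> c ->; rewrite -mulmxA BBi mulmx1.
Qed.
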